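(* Let $(\Phi,\cdot,\cap,\xi_\Phi,\delta_\Phi)$ be a transformative $\cap$-semigroup of transformations of a nonempty set $A$. Then for every subset $H_\Phi\subseteq\Phi$ and every $\varphi\in f_{\xi_\Phi}(H_\Phi)$, $$\bigcap_{\psi\in H_\Phi}\mathrm{pr}_1\psi\subseteq\mathrm{pr}_1\varphi.$$
   Context: A transformation of $A$ is a partial map $A\to A$, regarded as a subset of $A\times A$, with domain $\mathrm{pr}_1 f$ and image $\mathrm{pr}_2 f$. The product $f\cdot g$ is the composite ''first $f$, then $g$'': $(f\cdot g)(a)=g(f(a))$, defined exactly when $a\in\mathrm{pr}_1 f$ and $f(a)\in\mathrm{pr}_1 g$. A transformative $\cap$-semigroup of transformations is $(\Phi,\cdot,\cap,\xi_\Phi,\delta_\Phi)$ where $\Phi$ is a set of transformations of $A$ closed under this product and under set-theoretic intersection, $\xi_\Phi=\{(f,g)\in\Phi^2: f$ and $g$ coincide on $\mathrm{pr}_1 f\cap\mathrm{pr}_1 g\}$, and $\delta_\Phi=\{(f,g)\in\Phi^2:\mathrm{pr}_2 f\subseteq\mathrm{pr}_1 g\}$. Write $f\leqslant g$ iff $f\subseteq g$, $f\downarrow g$ iff $(f,g)\in\xi_\Phi$, $f\vdash g$ iff $(f,g)\in\delta_\Phi$. Let $\Phi^*=\Phi\cup\{e\}$ where $e$ is a new formally adjoined identity for the product, with conventions $e\leqslant e$, $e\vdash e$, $f\vdash e$ for all $f\in\Phi$; $a\boxdot b\leqslant c$ abbreviates $a\vdash b\wedge a\cdot b\leqslant c$.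 A subset $H\subseteq\Phi$ is $f_{\xi_\Phi}$-closed if for all $x,y,t\in\Phi^*$ and $z,u,v\in\Phi$: $u\downarrow v\wedge (u\cap v)\cdot x\boxdot y\leqslant z\cdot t\wedge u\in H\wedge v\cdot x\in H\Rightarrow z\in H$. For $X\subseteq\Phi$, $f_{\xi_\Phi}(X)$ is the least $f_{\xi_\Phi}$-closed subset of $\Phi$ containing $X$. The intersection over the empty family is taken to be $A$. *)

(* Defs.v *)
Definition trans (A : Type) := A -> A -> Prop.

Section Transformations.
Variable A : Type.

Definition functional (f : trans A) : Prop :=
  forall a b c, f a b -> f a c -> b = c.

Definition pr1 (f : trans A) : A -> Prop := fun a => exists b, f a b.
Definition pr2 (f : trans A) : A -> Prop := fun b => exists a, f a b.

(* f . g = "first f, then g" *)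
Definition tcomp (f g : trans A) : trans A :=
  fun a c => exists b, f a b /\ g b c.

Definition tinter (f g : trans A) : trans A := fun a b => f a b /\ g a b.

Definition tle (f g : trans A) : Prop := forall a b, f a b -> g a b.

Definition txi (f g : trans A) : Prop :=
  forall a b c, f a b -> g a c -> b = c.

Definition tdelta (f g : trans A) : Prop := forall b, pr2 f b -> pr1 g b.

Definition trans_cap_semigroup (Phi : trans A -> Prop) : Prop :=
  (forall f, Phi f -> functional f) /\
  (forall f g, Phi f -> Phi g -> Phi (tcomp f g)) /\
  (forall f g, Phi f -> Phi g -> Phi (tinter f g)).

(* Phi* = Phi ∪ {e}: elements are [option (trans A)], [None] being the
   formally adjoined identity e. *)
Definition in_star (Phi : trans A -> Prop) (x : option (trans A)) : Prop :=
  match x with None => True | Some f => Phi f end.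

Definition mulS (f : trans A) (x : option (trans A)) : trans A :=
  match x with None => f | Some g => tcomp f g end.

Definition deltaS (f : trans A) (x : option (trans A)) : Prop :=
  match x with None => True | Some g => tdelta f g end.

Definition fxi_closed (Phi : trans A -> Prop) (H : trans A -> Prop) : Prop :=
  forall (x y t : option (trans A)) (z u v : trans A),
    in_star Phi x -> in_star Phi y -> in_star Phi t ->
    Phi z -> Phi u -> Phi v ->
    txi u v ->
    deltaS (mulS (tinter u v) x) y ->
    tle (mulS (mulS (tinter u v) x) y) (mulS z t) ->
    H u -> H (mulS v x) ->
    H z.

Definition fxi (Phi : trans A -> Prop) (X : trans A -> Prop) : trans A -> Prop :=
  fun phi => forall H : trans A -> Prop,
    (forall f, H f -> Phi f) -> fxi_closed Phi H ->
    (forall f, X f -> H f) -> H phi.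

End Transformations.

Arguments pr1 {A} f _.
Arguments pr2 {A} f _.
Arguments fxi {A} Phi X _.
Arguments trans_cap_semigroup {A} Phi.

(* Main.v *)
Require Import Defs.

Theorem proposition7 (A : Type) (Phi : trans A -> Prop) :
  inhabited A ->
  trans_cap_semigroup Phi ->
  forall (H : trans A -> Prop),
    (forall f, H f -> Phi f) ->
    forall phi, fxi Phi H phi ->
    (* ⋂_{psi ∈ H} pr1 psi ⊆ pr1 phi  (empty intersection = A) *)
    forall a : A, (forall psi, H psi -> pr1 psi a) -> pr1 phi a.
Proof.
  intros _ _ H HPhi phi Hphi.
  apply (Hphi (fun f => Phi f /\ forall a, (forall psi, H psi -> pr1 psi a) -> pr1 f a)).
  - intros f [Hf _]; exact Hf.
  - intros x y t z u v _ _ _ Hz _ _ Hxi Hdel Hle [_ Hu] [_ Hvx].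
    split; [exact Hz|].
    intros a Ha.
    destruct (Hu a Ha) as [c Hc].
    destruct (Hvx a Ha) as [d Hd].
    assert (Hm : pr1 (mulS A (tinter A u v) x) a).
    { destruct x as [g|]; simpl in *.
      - destruct Hd as [b [Hb Hg]].
        pose proof (Hxi _ _ _ Hc Hb); subst.
        exists d, b; split; [split|]; assumption.
      - pose proof (Hxi _ _ _ Hc Hd); subst. exists d; split; assumption. }
    assert (Hm2 : pr1 (mulS A (mulS A (tinter A u v) x) y) a).
    { destruct Hm as [e He]. destruct y as [g|]; simpl in *.
      - destruct (Hdel e (ex_intro _ a He)) as [k Hk].
        exists k, e; split; assumption.
      - exists e; exact He. }
    destruct Hm2 as [k Hk].
    apply Hle in Hk.
    destruct t as [g|]; simpl in Hk.
    + destruct Hk as [b [Hb _]]. exists b; exact Hb.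
    + exists k; exact Hk.
  - intros f Hf; split; [apply HPhi; exact Hf|].
    intros a Ha; apply Ha; exact Hf.
Qed.
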